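(* Let an SSSCG have weakly monotonic cost functions with identical leader and follower costs, $c_{i,\ell}=c_{i,f}=:c_i$ for all $i\in R$. Let $(\sigma_\ell,\nu)$ be an OSE or a PSE in which $\sigma_\ell$ is pure, selecting resource $i^\star$. Then this profile is a pure Nash equilibrium of the (simultaneous) singleton congestion game with players $F\cup\{\ell\}$ and costs $c_i$: i.e., for all $i\ne i^\star$ with $\nu_i>0$ and all $j\ne i$, $c_i(\nu_i+[i=i^\star])\le c_j(\nu_j+[j=i^\star]+1)$, the same holding for $i=i^\star$ with $\nu_{i^\star}>0$, namely $c_{i^\star}(\nu_{i^\star}+1)\le c_j(\nu_j+1)$ for $j\ne i^\star$; and the leader has no profitable unilateral deviation: $c_{i^\star}(\nu_{i^\star}+1)\le c_j(\nu_j+1)$ for all $j\ne i^\star$.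
   Context: A symmetric Stackelberg singleton congestion game (SSSCG) consists of a leader $\ell$, a finite set $F$ of followers, a finite set $R$ of resources which every player may select (each player selects exactly one), and cost functions $c_{i,\ell},c_{i,f}:\mathbb N\to\mathbb Q$ ($i\in R$) for the leader and the followers with $c_{i,\ell}(0)=c_{i,f}(0)=0$. The leader commits to a probability distribution $\sigma_\ell$ on $R$ (pure if it puts probability $1$ on one resource). A followers' configuration is $\nu\in\mathbb N^R$ with $\sum_i\nu_i=|F|$. The followers' expected cost of resource $i$ with $x$ followers is $c^{\sigma_\ell}_{i,f}(x)=\sigma_\ell(i)c_{i,f}(x+1)+(1-\sigma_\ell(i))c_{i,f}(x)$; the leader's cost is $c_\ell^{(\sigma_\ell,\nu)}=\sum_{i\in R}\sigma_\ell(i)c_{i,\ell}(\nu_i+1)$. $\nu$ is a Nash equilibrium for $\sigma_\ell$ ($\nu\in E^{\sigma_\ell}$) if for all $i$ with $\nu_i>0$ and all $j\ne i$, $c^{\sigma_\ell}_{i,f}(\nu_i)\le c^{\sigma_\ell}_{j,f}(\nu_j+1)$. An OSE is a pair $(\sigma_\ell,\nu)$ with $\nu\in E^{\sigma_\ell}$ minimizing $c_\ell^{(\sigma_\ell,\nu)}$ over all such pairs. A PSE is a pair $(\sigma_\ell,\nu)$ such that $\sigma_\ell$ attains the minimum over all leader strategies of $\max_{\nu'\in E^{\sigma_\ell}}c_\ell^{(\sigma_\ell,\nu')}$ and $\nu\in E^{\sigma_\ell}$ attains that maximum. $[P]$ denotes $1$ if $P$ holds and $0$ otherwise. Weakly monotonic: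 $c_i(x)\le c_i(x+1)$ for all $i,x$. *)

(* Defs.v *)
From HB Require Import structures.
From mathcomp Require Import all_boot all_order all_algebra.
Set Implicit Arguments. Unset Strict Implicit. Unset Printing Implicit Defensive.
Import Order.TTheory GRing.Theory Num.Theory.
Local Open Scope ring_scope.

(* Resources: a finType R.  Followers: only their number nF = |F| matters.
   Cost functions: c : R -> nat -> rat, c i x = cost of resource i with x users. *)

Section SSSCG.
Variable R : finType.

Definition is_dist (s : {ffun R -> rat}) : Prop :=
  (forall i, 0 <= s i) /\ \sum_(i : R) s i = 1.

Definition is_pure_on (s : {ffun R -> rat}) (istar : R) : Prop := s istar = 1.

Definition is_config (nF : nat) (nu : {ffun R -> nat}) : Prop :=
  (\sum_(i : R) nu i)%N = nF.

Definition fcost (cf : R -> nat -> rat) (s : {ffun R -> rat}) (i : R) (x : nat) : rat :=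
  s i * cf i x.+1 + (1 - s i) * cf i x.

Definition lcost (cl : R -> nat -> rat) (s : {ffun R -> rat}) (nu : {ffun R -> nat}) : rat :=
  \sum_(i : R) s i * cl i (nu i).+1.

Definition is_NE (nF : nat) (cf : R -> nat -> rat) (s : {ffun R -> rat})
  (nu : {ffun R -> nat}) : Prop :=
  is_config nF nu /\
  forall i j : R, (0 < nu i)%N -> j != i ->
    fcost cf s i (nu i) <= fcost cf s j (nu j).+1.

Definition is_OSE (nF : nat) (cl cf : R -> nat -> rat) (s : {ffun R -> rat})
  (nu : {ffun R -> nat}) : Prop :=
  is_dist s /\ is_NE nF cf s nu /\
  forall s' nu', is_dist s' -> is_NE nF cf s' nu' -> lcost cl s nu <= lcost cl s' nu'.

(* pessimistic Stackelberg equilibrium: nu attains max_{nu' in E^s} of the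
   leader cost, and for every leader strategy s', max_{nu' in E^s'} of the
   leader cost is at least this value. *)
Definition is_PSE (nF : nat) (cl cf : R -> nat -> rat) (s : {ffun R -> rat})
  (nu : {ffun R -> nat}) : Prop :=
  is_dist s /\ is_NE nF cf s nu /\
  (forall nu', is_NE nF cf s nu' -> lcost cl s nu' <= lcost cl s nu) /\
  (forall s', is_dist s' ->
     exists2 nu', is_NE nF cf s' nu' & lcost cl s nu <= lcost cl s' nu').

Definition weakly_monotonic (c : R -> nat -> rat) : Prop :=
  forall i x, c i x <= c i x.+1.

End SSSCG.

(* Main.v *)
Require Import Defs.
From HB Require Import structures.
From mathcomp Require Import all_boot all_order all_algebra.
Import Order.TTheory GRing.Theory Num.Theory.
Local Open Scope ring_scope.
Set Implicit Arguments.

Lemma exmin (R : finType) (f : R -> rat) (a j0 : R) : j0 != a ->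
  exists2 j, j != a & forall k, k != a -> f j <= f k.
Proof.
move=> hj0.
case: (@arg_minP _ _ _ j0 (fun k => k != a) f hj0) => j hj hmin.
by exists j.
Qed.

Lemma pure_zero (R : finType) (s : {ffun R -> rat}) a :
  is_dist s -> s a = 1 -> forall i, i != a -> s i = 0.
Proof.
move=> [h0 h1] ha.
have hs : \sum_(k | k != a) s k = 0.
  move: h1; rewrite (bigD1 a) //= ha => e.
  by apply: (@addrI _ 1); rewrite e addr0.
exact: psumr_eq0P hs.
Qed.

Lemma fcost_pure (R : finType) (c : R -> nat -> rat) (s : {ffun R -> rat}) a i x :
  is_dist s -> s a = 1 -> fcost c s i x = c i (x + (i == a))%N.
Proof.
move=> hd ha; rewrite /fcost.
case: (eqVneq i a) => [->|hia]; first by rewrite ha subrr mul0r addr0 mul1r addn1.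
by rewrite (pure_zero _ hd ha _ hia) subr0 mul0r add0r mul1r addn0.
Qed.

Lemma lcost_pure (R : finType) (c : R -> nat -> rat) (s : {ffun R -> rat}) a nu :
  is_dist s -> s a = 1 -> lcost c s nu = c a (nu a).+1.
Proof.
move=> hd ha; rewrite /lcost (bigD1 a) //= ha mul1r big1 ?addr0 //.
by move=> i hi; rewrite (pure_zero _ hd ha _ hi) mul0r.
Qed.

Definition pure_s (R : finType) (j : R) : {ffun R -> rat} := [ffun k => (k == j)%:R].
Arguments pure_s {R} j.

Lemma pure_dist (R : finType) (j : R) : is_dist (pure_s j) /\ pure_s j j = 1.
Proof.
split; last by rewrite ffunE eqxx.
split; first by move=> i; rewrite ffunE ler0n.
rewrite (bigD1 j) //= ffunE eqxx big1 ?addr0 //.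
by move=> i /negbTE hi; rewrite ffunE hi.
Qed.

Lemma count_dec (R : finType) (nu nu' : {ffun R -> nat}) j :
  (\sum_i nu i = \sum_i nu' i)%N -> (nu j < nu' j)%N ->
  exists2 k, k != j & (nu' k < nu k)%N.
Proof.
move=> hs hj.
case: (pickP (fun k => (k != j) && (nu' k < nu k)%N)) => [k /andP[h1 h2]|hn].
  by exists k.
exfalso.
have : (\sum_i nu i < \sum_i nu' i)%N.
  rewrite (bigD1 j) //= [X in (_ < X)%N](bigD1 j) //=.
  rewrite -addSn leq_add //.
  apply: leq_sum => k hk; move: (hn k); rewrite hk /= => /negbT.
  by rewrite -leqNgt.
by rewrite hs ltnn.
Qed.

Theorem theorem10 (R : finType) (nF : nat) (c : R -> nat -> rat)
  (c0 : forall i, c i 0%N = 0)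
  (hmon : weakly_monotonic c)
  (s : {ffun R -> rat}) (nu : {ffun R -> nat}) (istar : R)
  (heq : is_OSE nF c c s nu \/ is_PSE nF c c s nu)
  (hpure : is_pure_on s istar) :
  (forall i j : R, (0 < nu i)%N -> j != i ->
     c i (nu i + (i == istar))%N <= c j (nu j + (j == istar)).+1) /\
  (forall j : R, j != istar -> c istar (nu istar).+1 <= c j (nu j).+1).
Proof.
have [hd [hcfg hne]] : is_dist s /\ is_NE nF c s nu.
  by case: heq => [[? [? _]]|[? [? _]]].
have hmonle : forall i x y, (x <= y)%N -> c i x <= c i y.
  move=> i x y /subnK <-; elim: (y - x)%N => [|n IH]; first by rewrite add0n.
  by apply: (le_trans IH); rewrite addSn; apply: hmon.
have hf : forall i x, fcost c s i x = c i (x + (i == istar))%N.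
  by move=> i x; apply: fcost_pure.
split.
  move=> i j hi hji; move: (hne i j hi hji); rewrite !hf.
  by rewrite addSn.
move=> j hj.
case: (posnP (nu istar)) => [h0|hpos]; last first.
  move: (hne istar j hpos hj); rewrite !hf eqxx (negbTE hj) addn0 addn1.
  by [].
rewrite h0.
rewrite leNgt; apply/negP => hlt.
have [jm hjm hmin] := @exmin R (fun k => c k (nu k).+1) istar j hj.
have hm : c jm (nu jm).+1 < c istar 1.
  by apply: le_lt_trans (hmin j hj) hlt.
have [hd' hp'] := @pure_dist R jm.
have hf' : forall i x, fcost c (pure_s jm) i x = c i (x + (i == jm))%N.
  by move=> i x; apply: fcost_pure.
have hl : lcost c s nu = c istar 1.
  by rewrite (@lcost_pure R c s istar nu hd hpure) h0.
have holdne : forall k, (0 < nu k)%N -> k != jm -> c k (nu k) <= c jm (nu jm).+1.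
  move=> k hk hkj.
  have hki : k != istar by apply/eqP => e; move: hk; rewrite e h0.
  have hjk : jm != k by rewrite eq_sym.
  move: (hne k jm hk hjk); rewrite !hf (negbTE hki) (negbTE hjm).
  by rewrite !addn0.
have hC : forall nu', is_NE nF c (pure_s jm) nu' -> lcost c (pure_s jm) nu' < c istar 1.
  move=> nu' [hcfg' hne'].
  rewrite (@lcost_pure R c (pure_s jm) jm nu' hd' hp').
  case: (leqP (nu' jm) (nu jm)) => hle.
    by apply: le_lt_trans hm; apply: hmonle.
  have [k hkj hk] := @count_dec R nu nu' jm (etrans hcfg (esym hcfg')) hle.
  have hnk : (0 < nu k)%N by apply: leq_ltn_trans hk.
  have h1 := hne' jm k (leq_ltn_trans (leq0n _) hle) hkj.
  rewrite !hf' eqxx (negbTE hkj) addn0 addn1 in h1.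
  apply: le_lt_trans h1 _; apply: le_lt_trans hm.
  apply: le_trans (holdne k hnk hkj); apply: hmonle.
  exact: hk.
case: heq => [[_ [_ hopt]]|[_ [_ [_ hpes]]]].
  have hNE : is_NE nF c (pure_s jm) nu.
    split => // i k hi hki; rewrite !hf'.
    have hii : i != istar by apply/eqP => e; move: hi; rewrite e h0.
    case: (eqVneq i jm) => [eij|nij].
      subst i; rewrite ?eqxx ?(negbTE hki) addn0 addn1.
      case: (eqVneq k istar) => [->|nki]; last exact: hmin.
      by rewrite h0; apply: ltW.
    rewrite ?(negbTE nij) ?addn0.
    have ho := holdne i hi nij.
    case: (eqVneq k jm) => [->|nkj].
      by rewrite ?eqxx addn1; apply: (le_trans ho); apply: hmon.
    rewrite ?(negbTE nkj) ?addn0.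
    case: (eqVneq k istar) => [->|nki].
      by rewrite h0; apply: ltW; apply: le_lt_trans hm.
    move: (hne i k hi hki); rewrite !hf (negbTE hii) (negbTE nki) !addn0.
    by [].
  have := hopt _ _ hd' hNE; rewrite hl => h.
  by move: (lt_le_trans (hC _ hNE) h); rewrite ltxx.
have [nu' hn' hle] := hpes _ hd'.
by move: hle; rewrite hl => hle; move: (lt_le_trans (hC _ hn') hle); rewrite ltxx.
Qed.
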